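(* For all graphs $G$ and $H$: if $G$ and $H$ are distinguishable by EB-1WL, then there exist $d\ge1$, $t\ge1$ and a $d$-dimensional EB-GNN $\mathcal{T}$ with $t$ layers such that $\mathcal{T}(G)\neq\mathcal{T}(H)$.
   Context: All graphs are finite, simple and undirected, without isolated vertices; $N(v)$ denotes the neighborhood of $v$. An ordered edge of $G=(V,E)$ is a pair $(u,v)$ with $\{u,v\}\in E$. EB-1WL coloring: $\mathrm{eb}^{(0)}(G,(u,v))=1$ for every ordered edge, and $\mathrm{eb}^{(\ell+1)}(G,(u,v)) = \big(\mathrm{eb}^{(\ell)}(G,(u,v)),\ \{\!\{\mathrm{eb}^{(\ell)}(G,(u,x)) : x\in N(u)\}\!\},\ \{\!\{(\mathrm{eb}^{(\ell)}(G,(u,y)),\mathrm{eb}^{(\ell)}(G,(v,y))) : y\in N(u)\cap N(v)\}\!\},\ \{\!\{\mathrm{eb}^{(\ell)}(G,(v,z)) : z\in N(v)\}\!\}\big)$. $\mathrm{eb}^{(\ell)}(G)$ is the multiset of $\mathrm{eb}^{(\ell)}(G,(u,v))$ over all ordered edges. Graphs are distinguishable by EB-1WL if they have different numbers of vertices or there is $\ell$ with $\mathrm{eb}^{(\ell)}(G)\neq\mathrm{eb}^{(\ell)}(H)$. EB-GNN: a $d$-dimensional EB-GNN $\mathcal{T}$ with $t$ layers is given by real parameters $a_i,b_i,c_i,u_i,v_i\in\mathbb{R}^d$, $A_i,C_i,U_i,V_i\in\mathbb{R}^{d\times d}$, $B_i\in\mathbb{R}^{d\times 2d}$ for $i=1,\dots,t$.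 On $G$ it computes for every ordered edge $(u,v)$: $f^{(0)}(u,v)=(1,0,\dots,0)^T\in\mathbb{R}^d$, and for $1\le i\le t$: $\alpha^{(i)}(u)=\sum_{x\in N(u)}\mathrm{ReLU}(A_if^{(i-1)}(u,x)+a_i)$, $\beta^{(i)}(u,v)=\sum_{y\in N(u)\cap N(v)}\mathrm{ReLU}\big(B_i\binom{f^{(i-1)}(u,y)}{f^{(i-1)}(v,y)}+b_i\big)$, $\gamma^{(i)}(v)=\sum_{z\in N(v)}\mathrm{ReLU}(C_if^{(i-1)}(v,z)+c_i)$, $g^{(i)}(u,v)=f^{(i-1)}(u,v)+\alpha^{(i)}(u)+\beta^{(i)}(u,v)+\gamma^{(i)}(v)$, $f^{(i)}(u,v)=g^{(i)}(u,v)+V_i\,\mathrm{ReLU}(U_ig^{(i)}(u,v)+u_i)+v_i$, where $\mathrm{ReLU}(x)=\max\{0,x\}$ coordinatewise. The output is $\mathcal{T}(G)=\sum_{(u,v):\{u,v\}\in E}f^{(t)}(u,v)$ (sum over ordered edges). *)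

(* Defs.v *)
From HB Require Import structures.
From mathcomp Require Import all_boot all_order all_algebra.
From mathcomp Require Import finmap multiset.
From mathcomp Require Import reals Rstruct.
Set Implicit Arguments. Unset Strict Implicit. Unset Printing Implicit Defensive.

Definition graph_ok (V : finType) (e : rel V) : Prop :=
  symmetric e /\ irreflexive e /\ (forall v : V, exists x, e v x).

(* Multisets are
   finmap's {mset _}, so equality of colours is literally equality of these
   tuples with multiset equality. *)
Local Open Scope mset_scope.
Fixpoint colT (n : nat) : choiceType :=
  match n with
  | 0 => unit
  | n.+1 => (colT n * {mset colT n} * {mset (colT n * colT n)%type}
             * {mset colT n})%type
  end.

(* eb l u v : the colour eb^(l)(G,(u,v)); only meaningful for ordered edges
   (u,v) with e u v, and only ever consulted on such pairs. *)
Fixpoint eb (V : finType) (e : rel V) (l : nat) : V -> V -> colT l :=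
  match l return V -> V -> colT l with
  | 0 => fun _ _ => tt
  | l.+1 => fun u v =>
      let c := eb e l in
      (c u v,
       seq_mset [seq c u x | x <- enum V & e u x],
       seq_mset [seq (c u y, c v y) | y <- enum V & e u y && e v y],
       seq_mset [seq c v z | z <- enum V & e v z])
  end.

Definition eb_graph (V : finType) (e : rel V) (l : nat) : {mset colT l} :=
  seq_mset [seq eb e l p.1 p.2 | p <- enum [pred p : V * V | e p.1 p.2]].

Definition eb_distinguishable (VG : finType) (eG : rel VG)
    (VH : finType) (eH : rel VH) : Prop :=
  #|VG| <> #|VH| \/ exists l : nat, eb_graph eG l <> eb_graph eH l.

Local Close Scope mset_scope.
Local Open Scope ring_scope.
Notation R := Rdefinitions.R.

Record layer (d : nat) := Layer {
  la : 'cV[R]_d; lb : 'cV[R]_d; lc : 'cV[R]_d; lu : 'cV[R]_d; lv : 'cV[R]_d;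
  mA : 'M[R]_d; mB : 'M[R]_(d, d + d); mC : 'M[R]_d; mU : 'M[R]_d; mV : 'M[R]_d
}.

Definition relu (d : nat) (x : 'cV[R]_d) : 'cV[R]_d :=
  map_mx (fun r : R => Num.max r 0) x.

Definition f0 (V : finType) (d : nat) : V -> V -> 'cV[R]_d :=
  fun _ _ => \col_(i < d) (if val i == 0%N then 1 else 0).

Definition layer_step (V : finType) (e : rel V) (d : nat) (L : layer d)
    (f : V -> V -> 'cV[R]_d) : V -> V -> 'cV[R]_d :=
  fun u v =>
    let alpha := \sum_(x : V | e u x) relu (mA L *m f u x + la L) in
    let beta  := \sum_(y : V | e u y && e v y)
                    relu (mB L *m col_mx (f u y) (f v y) + lb L) in
    let gamma := \sum_(z : V | e v z) relu (mC L *m f v z + lc L) in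
    let g := f u v + alpha + beta + gamma in
    g + mV L *m relu (mU L *m g + lu L) + lv L.

Definition gnn_f (V : finType) (e : rel V) (d : nat) (net : seq (layer d)) :
    V -> V -> 'cV[R]_d :=
  foldl (fun f L => layer_step e L f) (@f0 V d) net.

Definition gnn_out (V : finType) (e : rel V) (d : nat) (net : seq (layer d)) :
    'cV[R]_d :=
  \sum_(u : V) \sum_(v : V | e u v) gnn_f e net u v.

(* Main.v *)
Require Import Defs.
From HB Require Import structures.
From mathcomp Require Import all_boot all_order all_algebra.
From mathcomp Require Import finmap multiset.
From mathcomp Require Import reals Rstruct.
From mathcomp Require Import ring lra zify.
Set Implicit Arguments. Unset Strict Implicit. Unset Printing Implicit Defensive.
Import Order.TTheory GRing.Theory Num.Theory.
Local Open Scope mset_scope.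
Local Open Scope ring_scope.


Section Coords.
Variable d : nat.

Definition at_ (x : 'cV[R]_d) (n : nat) : R := \sum_(q < d | val q == n) x q 0.

Lemma atE (x : 'cV[R]_d) (q : 'I_d) : at_ x q = x q 0.
Proof.
rewrite /at_ (bigD1 q) //= big1 ?addr0 // => j /andP[h1 h2].
by move: h2; rewrite -(inj_eq val_inj) h1.
Qed.

Lemma at_ge (x : 'cV[R]_d) n : (d <= n)%N -> at_ x n = 0.
Proof.
move=> h; rewrite /at_ big1 // => j /eqP hj.
by move: (ltn_ord j); rewrite hj ltnNge h.
Qed.

Lemma at_lt (x : 'cV[R]_d) n (h : (n < d)%N) : at_ x n = x (Ordinal h) 0.
Proof. by rewrite -atE. Qed.

Lemma at_ext (x y : 'cV[R]_d) : (forall n, (n < d)%N -> at_ x n = at_ y n) -> x = y.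
Proof.
move=> h; apply/matrixP => i j; rewrite (ord1 j) -!atE; exact: h.
Qed.

Lemma atD x y n : at_ (x + y) n = at_ x n + at_ y n.
Proof. by rewrite /at_ -big_split; apply: eq_bigr => i _; rewrite mxE. Qed.

Lemma at0 n : at_ 0 n = 0.
Proof. by rewrite /at_ big1 // => i _; rewrite mxE. Qed.

Lemma at_sum (I : Type) (r : seq I) (P : pred I) (F : I -> 'cV[R]_d) n :
  at_ (\sum_(i <- r | P i) F i) n = \sum_(i <- r | P i) at_ (F i) n.
Proof.
elim/big_rec2: _ => [|i y1 y2 _ <-]; first exact: at0.
by rewrite atD.
Qed.

Lemma at_relu x n : at_ (relu x) n = Num.max (at_ x n) 0.
Proof.
case: (ltnP n d) => h; last by rewrite !at_ge // maxxx.
by rewrite !(at_lt _ h) mxE.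
Qed.

Definition Mx (a : nat -> nat -> R) : 'M[R]_d := \matrix_(p < d, q < d) a p q.
Definition Cv (b : nat -> R) : 'cV[R]_d := \col_(p < d) b p.

Lemma at_Cv b n : (n < d)%N -> at_ (Cv b) n = b n.
Proof. by move=> h; rewrite (at_lt _ h) mxE. Qed.

Lemma at_Mx a x n : (n < d)%N -> at_ (Mx a *m x) n = \sum_(q < d) a n q * at_ x q.
Proof.
move=> h; rewrite (at_lt _ h) mxE; apply: eq_bigr => q _; by rewrite mxE atE.
Qed.

Lemma sum_sel (y : nat -> R) m : \sum_(q < d) (if val q == m then y q else 0) = if (m < d)%N then y m else 0.
Proof.
case: ltnP => h.
  rewrite (bigD1 (Ordinal h)) //= eqxx big1 ?addr0 // => j hj.
  case: eqP => // hj'; move: hj; suff -> : j = Ordinal h by rewrite eqxx.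
  exact: val_inj.
by rewrite big1 // => j _; case: eqP => // hj; move: (ltn_ord j); rewrite hj ltnNge h.
Qed.

Lemma at_Mx_sel (s : nat -> R) (g : nat -> nat) x n : (n < d)%N ->
  at_ (Mx (fun p q => if q == g p then s p else 0) *m x) n = s n * at_ x (g n).
Proof.
move=> h; rewrite at_Mx //.
transitivity (\sum_(q < d) (if val q == g n then s n * at_ x q else 0)).
  by apply: eq_bigr => q _; case: eqP => _; rewrite ?mul0r.
rewrite (sum_sel (fun q => s n * at_ x q)); case: ltnP => // hg; by rewrite at_ge ?mulr0.
Qed.

End Coords.


Lemma sum_mset_map (V : finType) (T : choiceType) (P : pred V) (h : V -> T)
  (M : nmodType) (phi : T -> M) :
  \sum_(x : V | P x) phi (h x) = \sum_(a <- seq_mset [seq h x | x <- enum V & P x]) phi a.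
Proof.
rewrite (perm_big _ (perm_eq_seq_mset _)) big_map big_filter.
by rewrite big_enum_cond /=; apply: eq_bigl => x.
Qed.

Section Step.
Variable d : nat.
Local Notation cv := 'cV[R]_d.

Definition Gfun (i : nat) (A : 'M[R]_d) (a : cv) (B : 'M[R]_(d, d + d)) (b : cv)
   (C : 'M[R]_d) (c : cv) (F : colT i -> cv) (x : colT i.+1) : cv :=
  F x.1.1.1 + \sum_(k <- enum_mset x.1.1.2) relu (A *m F k + a)
   + \sum_(p <- enum_mset x.1.2) relu (B *m col_mx (F p.1) (F p.2) + b)
   + \sum_(k <- enum_mset x.2) relu (C *m F k + c).

Definition Ffun (i : nat) (L : layer d) (F : colT i -> cv) (x : colT i.+1) : cv :=
  let g := Gfun (mA L) (la L) (mB L) (lb L) (mC L) (lc L) F x in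
  g + mV L *m relu (mU L *m g + lu L) + lv L.

Lemma step_fun (V : finType) (e : rel V) (i : nat) (L : layer d)
  (f : V -> V -> cv) (F : colT i -> cv) :
  (forall u v, e u v -> f u v = F (eb e i u v)) ->
  forall u v, e u v -> layer_step e L f u v = Ffun L F (eb e i.+1 u v).
Proof.
move=> hf u v huv; rewrite /layer_step /Ffun /Gfun /=.
rewrite (hf _ _ huv).
rewrite -(sum_mset_map (e u) (eb e i u) (fun k => relu (mA L *m F k + la L))).
rewrite -(sum_mset_map (fun y => e u y && e v y) (fun y => (eb e i u y, eb e i v y))
  (fun p => relu (mB L *m col_mx (F p.1) (F p.2) + lb L))).
rewrite -(sum_mset_map (e v) (eb e i v) (fun k => relu (mC L *m F k + lc L))).
rewrite (eq_bigr (fun x => relu (mA L *m F (eb e i u x) + la L))); last by move=> x hx; rewrite hf.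
rewrite (eq_bigr (fun x => relu (mC L *m F (eb e i v x) + lc L)) (P := fun z => e v z)); last by move=> x hx; rewrite hf.
rewrite (eq_bigr (fun y => relu (mB L *m col_mx (F (eb e i u y)) (F (eb e i v y)) + lb L)) (P := fun y => e u y && e v y)) //.
by move=> y /andP[h1 h2]; rewrite !hf.
Qed.

End Step.


Definition scal (d : nat) (M : R) (x : 'cV[R]_d) : R := \sum_(q < d) at_ x q * M ^+ q.

Lemma exists_inj_w (d : nat) (S : seq 'cV[R]_d) :
  exists M : R, {in S &, forall x y, scal M x = scal M y -> x = y}.
Proof.
pose pl (x : 'cV[R]_d) : {poly R} := \poly_(q < d) at_ x q.
have hpl x y : x != y -> pl x - pl y != 0.
  move=> hxy; rewrite subr_eq0; apply: contra hxy => /eqP h.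
  apply/eqP/at_ext => n hn.
  by move: (congr1 (fun p : {poly R} => p`_n) h); rewrite !coef_poly hn.
pose P := \prod_(pr <- [seq (x, y) | x <- S, y <- S] | pr.1 != pr.2) (pl pr.1 - pl pr.2).
have P0 : P != 0.
  rewrite prodf_seq_neq0; apply/allP => pr _; apply/implyP; exact: hpl.
pose rs := [seq (i%:R : R) | i <- iota 0 (size P)].
have : ~~ all (root P) rs.
  apply/negP => hall.
  suff hu : uniq rs by move: (max_poly_roots P0 hall hu); rewrite size_map size_iota ltnn.
  rewrite map_inj_uniq ?iota_uniq //; by move=> a b /eqP; rewrite eqr_nat => /eqP.
case/allPn => M _ hM; exists M => x y hx hy hs.
apply/eqP/negPn/negP => hxy.
move: hM; rewrite /root /P horner_prod prodf_seq_neq0 => /allP /(_ (x, y)).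
rewrite allpairs_f // => /(_ isT) /implyP /(_ hxy).
by rewrite hornerD hornerN !horner_poly -/(scal M x) -/(scal M y) hs subrr eqxx.
Qed.

Definition minl (s : seq R) : R := foldr Num.min 1 s.
Lemma minl_le s x : x \in s -> minl s <= x.
Proof.
elim: s => //= a s IH; rewrite inE => /orP[/eqP ->|h]; first by rewrite ge_min lexx.
by rewrite ge_min IH ?orbT.
Qed.
Lemma minl_gt0 s : all (fun x => 0 < x) s -> 0 < minl s.
Proof. elim: s => //= a s IH /andP[h1 h2]; by rewrite lt_min h1 IH. Qed.

Definition gap (s : seq R) : R :=
  minl [seq `|p.1 - p.2| | p <- [seq (x, y) | x <- s, y <- s] & p.1 != p.2].

Lemma gap_gt0 s : 0 < gap s.
Proof.
apply: minl_gt0; apply/allP => z /mapP[p]; rewrite mem_filter => /andP[h _] ->.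
by rewrite normr_gt0 subr_eq0.
Qed.

Lemma gap_le s x y : x \in s -> y \in s -> x != y -> gap s <= `|x - y|.
Proof.
move=> hx hy hxy; apply: minl_le; apply/mapP; exists (x, y) => //.
by rewrite mem_filter hxy allpairs_f.
Qed.

Definition hat (del z : R) : R :=
  (Num.max (z + del) 0 - 2 * Num.max z 0 + Num.max (z - del) 0) / del.

Lemma hat0 del : 0 < del -> hat del 0 = 1.
Proof.
move=> h; rewrite /hat add0r sub0r maxxx mulr0 subr0.
rewrite (max_idPl (ltW h)) (max_idPr _); last by rewrite oppr_le0 ltW.
by rewrite addr0 divff // gt_eqF.
Qed.

Lemma max0l (a : R) : 0 <= a -> Num.max a 0 = a.
Proof. by move=> h; apply/max_idPl. Qed.
Lemma max0r (a : R) : a <= 0 -> Num.max a 0 = 0.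
Proof. by move=> h; apply/max_idPr. Qed.

Lemma hat_far del z : 0 < del -> del <= `|z| -> hat del z = 0.
Proof.
move=> h hz; rewrite /hat; apply/eqP; rewrite mulf_eq0; apply/orP; left.
have [hz0|hz0] := boolP (0 <= z).
  move: hz; rewrite ger0_norm // => hz.
  rewrite (max0l hz0) max0l; last by lra.
  rewrite max0l; last by lra.
  apply/eqP; lra.
have hz1 : z < 0 by rewrite ltNge.
move: hz; rewrite ltr0_norm // => hz.
rewrite max0r; last by lra.
rewrite max0r; last by lra.
rewrite max0r; last by lra.
apply/eqP; lra.
Qed.


Lemma sum_bool_count (T : Type) (s : seq T) (P : pred T) :
  \sum_(a <- s) (P a)%:R = (count P s)%:R :> R.
Proof.
elim: s => [|a s IH]; first by rewrite big_nil.
by rewrite big_cons IH /= natrD.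
Qed.

Lemma mset_from_codes (T : choiceType) (P : pred T) (code : T -> nat) (N : nat)
  (A B : {mset T}) :
  {in P &, injective code} -> (forall a, P a -> (code a < N)%N) ->
  (forall a, a \in enum_mset A -> P a) -> (forall a, a \in enum_mset B -> P a) ->
  (forall k, (k < N)%N -> \sum_(a <- A) (code a == k)%:R = \sum_(a <- B) (code a == k)%:R :> R) ->
  A = B.
Proof.
move=> inj hN hA hB hs; apply/msetP => x; rewrite -!count_mem_mset.
case: (boolP (P x)) => hx.
  have h1 : forall Z : {mset T}, (forall a, a \in enum_mset Z -> P a) ->
     count_mem x Z = count (fun a => code a == code x) Z.
    move=> Z hZ; apply: eq_in_count => a ha; apply/eqP/eqP => [->//|].
    by move/inj; apply => //; apply: hZ.
  rewrite (h1 _ hA) (h1 _ hB); apply/eqP; rewrite -(eqr_nat R) -!sum_bool_count.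
  by rewrite hs ?hN.
have h2 : forall Z : {mset T}, (forall a, a \in enum_mset Z -> P a) -> count_mem x Z = 0%N.
  move=> Z hZ; apply/count_memPn; apply: contra hx; exact: hZ.
by rewrite (h2 _ hA) (h2 _ hB).
Qed.

Lemma pair_code (K ia ib m : nat) : (ib < K)%N ->
  ((ia * K + ib == m) = (ia == m %/ K) && (ib == m %% K))%N.
Proof.
move=> hb; have hK : (0 < K)%N by apply: leq_ltn_trans hb.
apply/eqP/andP => [<-|[/eqP -> /eqP ->]]; last by rewrite -divn_eq.
by rewrite divnMDl // modnMDl divn_small ?addn0 ?modn_small.
Qed.

Lemma max_bool2 (b1 b2 : bool) : Num.max ((b1%:R : R) + b2%:R - 1) 0 = (b1 && b2)%:R.
Proof.
case: b1; case: b2 => /=.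
- by rewrite addrK; apply/max_idPl; exact: ler01.
- by rewrite addr0 subrr maxxx.
- by rewrite add0r subrr maxxx.
- by rewrite add0r sub0r; apply/max_idPr; rewrite oppr_le0 ler01.
Qed.


Fixpoint dflt (n : nat) : colT n :=
  match n return colT n with 0 => tt | n.+1 => (dflt n, mset0, mset0, mset0) end.

Definition cols (V : finType) (e : rel V) i :=
  [seq eb e i p.1 p.2 | p <- enum [pred p : V * V | e p.1 p.2]].

Lemma size_cols (V : finType) (e : rel V) i : (size (cols e i) <= #|V| * #|V|)%N.
Proof.
rewrite size_map -cardE -card_prod; exact: max_card.
Qed.

Lemma mem_cols (V : finType) (e : rel V) i u v : e u v -> eb e i u v \in cols e i.
Proof. by move=> h; apply/mapP; exists (u, v) => //; rewrite mem_enum inE. Qed.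

Lemma mem_seq_mset (T : choiceType) (s : seq T) a : (a \in enum_mset (seq_mset s)) = (a \in s).
Proof. exact: perm_mem (perm_eq_seq_mset s) a. Qed.

Definition good (i : nat) (C : seq (colT i)) (x : colT i.+1) : Prop :=
 [/\ x.1.1.1 \in C, (forall a, a \in enum_mset x.1.1.2 -> a \in C),
     (forall p, p \in enum_mset x.1.2 -> (p.1 \in C) && (p.2 \in C)) &
     (forall a, a \in enum_mset x.2 -> a \in C)].

Lemma good_eb (V : finType) (e : rel V) i (C : seq (colT i)) :
  (forall u v, e u v -> eb e i u v \in C) ->
  forall u v, e u v -> good C (eb e i.+1 u v).
Proof.
move=> hC u v huv; split => /=.
- exact: hC.
- move=> a; rewrite mem_seq_mset => /mapP[x]; rewrite mem_filter => /andP[h _] ->; exact: hC.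
- move=> p; rewrite mem_seq_mset => /mapP[x]; rewrite mem_filter => /andP[/andP[h1 h2] _] ->.
  by rewrite /= !hC.
- move=> a; rewrite mem_seq_mset => /mapP[x]; rewrite mem_filter => /andP[h _] ->; exact: hC.
Qed.

Section Main.
Variables (VG : finType) (eG : rel VG) (VH : finType) (eH : rel VH).

Definition Cs i := undup (cols eG i ++ cols eH i).
Definition K := (#|VG| * #|VG| + #|VH| * #|VH|).+1.

Lemma size_Cs i : (size (Cs i) < K)%N.
Proof.
rewrite /Cs ltnS; apply: leq_trans (size_undup _) _; rewrite size_cat.
by apply: leq_add; apply: size_cols.
Qed.

Lemma uniq_Cs i : uniq (Cs i).
Proof. exact: undup_uniq. Qed.

Lemma memG i u v : eG u v -> eb eG i u v \in Cs i.
Proof. by move=> h; rewrite mem_undup mem_cat mem_cols. Qed.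
Lemma memH i u v : eH u v -> eb eH i u v \in Cs i.
Proof. by move=> h; rewrite mem_undup mem_cat mem_cols ?orbT. Qed.

Lemma Cs_good i x : x \in Cs i.+1 -> good (Cs i) x.
Proof.
rewrite mem_undup mem_cat => /orP[]/mapP[p]; rewrite mem_enum inE => h ->.
  exact: good_eb (memG i) _ _ h.
exact: good_eb (memH i) _ _ h.
Qed.

Definition W := (3 * K + K * K)%N.

Variable Lmax : nat.
Definition d := (Lmax.+1 * W)%N.

Definition Inv (i : nat) (net : seq (layer d)) (F : colT i -> 'cV[R]_d) : Prop :=
  [/\ forall u v, eG u v -> gnn_f eG net u v = F (eb eG i u v),
      forall u v, eH u v -> gnn_f eH net u v = F (eb eH i u v),
      forall c, c \in Cs i -> forall k, (k < K)%N ->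
          at_ (F c) (i * W + k) = (k == index c (Cs i))%:R &
      forall c, c \in Cs i -> forall n, (i.+1 * W <= n)%N -> at_ (F c) n = 0].

End Main.


Lemma nF : (false%:R : R) = 0. Proof. by []. Qed.
Lemma nT : (true%:R : R) = 1. Proof. by []. Qed.
Definition inb (lo len n : nat) : bool := (lo <= n)%N && (n < lo + len)%N.

Section Layer.
Variables (VG : finType) (eG : rel VG) (VH : finType) (eH : rel VH) (Lmax : nat).
Local Notation dd := (d VG VH Lmax).
Local Notation KK := (K VG VH).
Local Notation WW := (W VG VH).
Local Notation Cs := (Cs eG eH).
Variables (i : nat) (net : seq (layer dd)) (F : colT i -> 'cV[R]_dd).
Hypothesis hi : (i.+1 <= Lmax)%N.
Hypothesis hInv : Inv eG eH net F.

Definition Bb := (i * WW)%N.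
Definition R0 := (i.+1 * WW)%N.
Definition Ab := (R0 + KK)%N.
Definition Gb := (R0 + 2 * KK)%N.
Definition Pb := (R0 + 3 * KK)%N.

Definition Amx : 'M[R]_dd := Mx dd (fun p q => if q == (p - Ab + Bb)%N then (inb Ab KK p)%:R else 0).
Definition Cmx : 'M[R]_dd := Mx dd (fun p q => if q == (p - Gb + Bb)%N then (inb Gb KK p)%:R else 0).
Definition B1 : 'M[R]_dd := Mx dd (fun p q => if q == (Bb + (p - Pb) %/ KK)%N then (inb Pb (KK * KK)%N p)%:R else 0).
Definition B2 : 'M[R]_dd := Mx dd (fun p q => if q == (Bb + (p - Pb) %% KK)%N then (inb Pb (KK * KK)%N p)%:R else 0).
Definition Bmx : 'M[R]_(dd, dd + dd) := row_mx B1 B2.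
Definition bv : 'cV[R]_dd := Cv dd (fun p => - (inb Pb (KK * KK)%N p)%:R).

Definition G := Gfun Amx 0 Bmx bv Cmx 0 F.

Lemma at_G (x : colT i.+1) n : (n < dd)%N ->
  at_ (G x) n = at_ (F x.1.1.1) n
   + \sum_(a <- enum_mset x.1.1.2) Num.max ((inb Ab KK n)%:R * at_ (F a) (n - Ab + Bb)) 0
   + \sum_(p <- enum_mset x.1.2) Num.max ((inb Pb (KK * KK)%N n)%:R * at_ (F p.1) (Bb + (n - Pb) %/ KK)
          + (inb Pb (KK * KK)%N n)%:R * at_ (F p.2) (Bb + (n - Pb) %% KK) - (inb Pb (KK * KK)%N n)%:R) 0
   + \sum_(a <- enum_mset x.2) Num.max ((inb Gb KK n)%:R * at_ (F a) (n - Gb + Bb)) 0.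
Proof.
move=> hn; rewrite /G /Gfun !atD !at_sum.
congr (_ + _ + _ + _); apply: eq_bigr => a _; rewrite at_relu atD ?at_Mx_sel ?at0 ?addr0 //.
by rewrite mul_row_col !atD !at_Mx_sel // at_Cv.
Qed.


Lemma hK : (0 < KK)%N. Proof. by []. Qed.
Lemma hWW : WW = (3 * KK + KK * KK)%N. Proof. by []. Qed.
Lemma hR0 : R0 = (Bb + WW)%N. Proof. by rewrite /R0 /Bb mulSn addnC. Qed.
Lemma hd : (R0 + WW <= dd)%N.
Proof. by rewrite /R0 /d addnC -mulSn leq_mul2r ltnS hi orbT. Qed.

Lemma at_G_out x n : ~~ inb Ab KK n -> ~~ inb Gb KK n -> ~~ inb Pb (KK * KK)%N n ->
  at_ (G x) n = at_ (F x.1.1.1) n.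
Proof.
move=> h1 h2 h3; case: (ltnP n dd) => hn; last by rewrite !at_ge.
rewrite at_G // (negbTE h1) (negbTE h2) (negbTE h3) !nF.
rewrite !big1 ?addr0 // => *; by rewrite !mul0r ?addr0 ?subr0 maxxx.
Qed.

Lemma good_F x : good (Cs i) x -> forall n, (R0 <= n)%N -> at_ (F x.1.1.1) n = 0.
Proof. by case=> h1 _ _ _ n hn; case: hInv => _ _ _ ->. Qed.

Lemma onehot a k : a \in Cs i -> (k < KK)%N -> at_ (F a) (Bb + k) = (k == index a (Cs i))%:R.
Proof. by move=> ha hk; case: hInv => _ _ h _; rewrite h. Qed.

Lemma index_ltK j a : a \in Cs j -> (index a (Cs j) < KK)%N.
Proof. by move=> h; apply: leq_trans (ltnW (size_Cs eG eH j)); rewrite index_mem. Qed.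

Lemma max_nat (n : nat) : Num.max (n%:R : R) 0 = n%:R.
Proof. by apply/max_idPl; apply: ler0n. Qed.

Lemma at_G_alpha x k : good (Cs i) x -> (k < KK)%N ->
  at_ (G x) (Ab + k) = \sum_(a <- enum_mset x.1.1.2) (index a (Cs i) == k)%:R.
Proof.
move=> hg hk; have hK := hK; have hd := hd; have hR0 := hR0; have hW := hWW.
have hn : (Ab + k < dd)%N by rewrite /Ab; lia.
rewrite at_G // good_F //; last by rewrite /Ab; lia.
have -> : inb Ab KK (Ab + k) by rewrite /inb; lia.
have -> : inb Pb (KK * KK)%N (Ab + k) = false by rewrite /inb /Pb /Ab; lia.
have -> : inb Gb KK (Ab + k) = false by rewrite /inb /Gb /Ab; lia.
rewrite !nF !nT [in X in _ + X + _]big1 ?[in X in _ + X]big1 ?addr0 ?add0r; first last.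
  1,2: by move=> *; rewrite !mul0r ?addr0 ?subr0 maxxx.
case: hg => _ ha _ _; apply: eq_big_seq => a /ha hca.
by rewrite mul1r addKn addnC onehot // max_nat eq_sym.
Qed.

Lemma at_G_gamma x k : good (Cs i) x -> (k < KK)%N ->
  at_ (G x) (Gb + k) = \sum_(a <- enum_mset x.2) (index a (Cs i) == k)%:R.
Proof.
move=> hg hk; have hK := hK; have hd := hd; have hR0 := hR0; have hW := hWW.
have hn : (Gb + k < dd)%N by rewrite /Gb; lia.
rewrite at_G // good_F //; last by rewrite /Gb; lia.
have -> : inb Gb KK (Gb + k) by rewrite /inb; lia.
have -> : inb Pb (KK * KK)%N (Gb + k) = false by rewrite /inb /Pb /Gb; lia.
have -> : inb Ab KK (Gb + k) = false by rewrite /inb /Gb /Ab; lia.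
rewrite !nF !nT [in X in X + _ + _]big1 ?[in X in _ + X + _]big1 ?addr0 ?add0r; first last.
  1,2: by move=> *; rewrite !mul0r ?addr0 ?subr0 maxxx.
case: hg => _ _ _ ha; apply: eq_big_seq => a /ha hca.
by rewrite mul1r addKn addnC onehot // max_nat eq_sym.
Qed.

Lemma at_G_beta x m : good (Cs i) x -> (m < KK * KK)%N ->
  at_ (G x) (Pb + m) = \sum_(p <- enum_mset x.1.2)
      (index p.1 (Cs i) * KK + index p.2 (Cs i) == m)%N%:R.
Proof.
move=> hg hm; have hK := hK; have hd := hd; have hR0 := hR0; have hW := hWW.
have hn : (Pb + m < dd)%N by rewrite /Pb; lia.
rewrite at_G // good_F //; last by rewrite /Pb; lia.
have -> : inb Pb (KK * KK)%N (Pb + m) by rewrite /inb; lia.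
have -> : inb Gb KK (Pb + m) = false by rewrite /inb /Pb /Gb; lia.
have -> : inb Ab KK (Pb + m) = false by rewrite /inb /Pb /Ab; lia.
rewrite !nF !nT [in X in X + _ + _]big1 ?[in X in _ + X]big1 ?addr0 ?add0r; first last.
  1,2: by move=> *; rewrite !mul0r ?addr0 ?subr0 maxxx.
case: hg => _ _ hp _; apply: eq_big_seq => p /hp /andP[h1 h2].
have hq : (m %/ KK < KK)%N by rewrite ltn_divLR.
have hr : (m %% KK < KK)%N by rewrite ltn_mod.
rewrite !mul1r addKn !onehot // max_bool2 pair_code ?index_mem ?(leq_trans _ (ltnW (size_Cs _ _ _))) //.
  by rewrite (eq_sym (index p.1 _)) (eq_sym (index p.2 _)).
exact: index_ltK.
Qed.

Lemma at_G_low x n : (n < R0 + KK)%N -> at_ (G x) n = at_ (F x.1.1.1) n.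
Proof.
move=> h; have hK := hK.
by apply: at_G_out; rewrite /inb /Ab /Gb /Pb; lia.
Qed.

Lemma at_G_high x n : good (Cs i) x -> (R0 + WW <= n)%N -> at_ (G x) n = 0.
Proof.
move=> hg h; have hK := hK; have hW := hWW.
rewrite at_G_out ?good_F //; try (rewrite /inb /Ab /Gb /Pb; lia).
Qed.

Lemma index_inj_Cs j : {in Cs j &, injective (index^~ (Cs j))}.
Proof.
move=> a b ha hb /= e.
by rewrite -(nth_index (dflt j) ha) e nth_index.
Qed.

Lemma G_inj x y : x \in Cs i.+1 -> y \in Cs i.+1 -> G x = G y -> x = y.
Proof.
move=> hx hy hG.
have [g1 ha1 hp1 hc1] := Cs_good hx.
have [g2 ha2 hp2 hc2] := Cs_good hy.
have hK := hK; have hR0 := hR0; have hW := hWW.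
have e1 : x.1.1.1 = y.1.1.1.
  have hi1 := index_ltK g1.
  have := congr1 (fun z => at_ z (Bb + index x.1.1.1 (Cs i))) hG => /=.
  have hlt : (Bb + index x.1.1.1 (Cs i) < R0 + KK)%N.
    by rewrite hR0 -addnA ltn_add2l; apply: ltn_addl.
  rewrite !at_G_low //.
  rewrite !onehot // eqxx.
  case: eqP => [e _|_]; first exact: index_inj_Cs.
  by rewrite nT nF => /eqP; rewrite oner_eq0.
have e2 : x.1.1.2 = y.1.1.2.
  apply: (@mset_from_codes _ (mem (Cs i)) (index^~ (Cs i)) KK) => //.
  - exact: index_inj_Cs.
  - by move=> a /index_ltK.
  - move=> k hk; have := congr1 (fun z => at_ z (Ab + k)) hG => /=.
    by rewrite !at_G_alpha //; apply: Cs_good.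
have e4 : x.2 = y.2.
  apply: (@mset_from_codes _ (mem (Cs i)) (index^~ (Cs i)) KK) => //.
  - exact: index_inj_Cs.
  - by move=> a /index_ltK.
  - move=> k hk; have := congr1 (fun z => at_ z (Gb + k)) hG => /=.
    by rewrite !at_G_gamma //; apply: Cs_good.
have e3 : x.1.2 = y.1.2.
  apply: (@mset_from_codes _ (fun p => (p.1 \in Cs i) && (p.2 \in Cs i))
            (fun p => index p.1 (Cs i) * KK + index p.2 (Cs i))%N (KK * KK)%N) => //.
  - move=> p q /andP[hp1' hp2'] /andP[hq1 hq2] /= e.
    have := congr1 (fun z => z %/ KK)%N e; have := congr1 (fun z => z %% KK)%N e => /=.
    rewrite !modnMDl !divnMDl // !modn_small ?divn_small ?index_ltK // !addn0.
    move=> E2 E1.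
    have f1 := index_inj_Cs hp1' hq1 E1; have f2 := index_inj_Cs hp2' hq2 E2.
    by rewrite [p]surjective_pairing [q]surjective_pairing f1 f2.
  - move=> p /andP[h1 h2] /=; have := index_ltK h1; have := index_ltK h2; nia.
  - move=> m hm; have := congr1 (fun z => at_ z (Pb + m)) hG => /=.
    by rewrite !at_G_beta //; apply: Cs_good.
move: e1 e2 e3 e4; case: x {hx hG g1 ha1 hp1 hc1} => [[[? ?] ?] ?];
  case: y {hy g2 ha2 hp2 hc2} => [[[? ?] ?] ?] /= -> -> -> -> //.
Qed.

Variable M : R.
Hypothesis hM : {in [seq G x | x <- Cs i.+1] &, forall a b, scal M a = scal M b -> a = b}.

Definition sv x := scal M (G x).
Definition del := gap [seq sv x | x <- Cs i.+1].
Definition pk k := sv (nth (dflt i.+1) (Cs i.+1) k).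
Definition uf (h : nat) : R :=
  if (h < KK)%N then - pk h + del
  else if (h < 2 * KK)%N then - pk (h - KK)
  else if (h < 3 * KK)%N then - pk (h - 2 * KK) - del else 0.
Definition Umx : 'M[R]_dd := Mx dd (fun h q => if (h < 3 * KK)%N then M ^+ q else 0).
Definition uv : 'cV[R]_dd := Cv dd uf.
Definition cond n := inb R0 KK n && (n - R0 < size (Cs i.+1))%N.
Definition V1 : 'M[R]_dd := Mx dd (fun n h => if h == (n - R0)%N then (cond n)%:R / del else 0).
Definition V2 : 'M[R]_dd := Mx dd (fun n h => if h == (KK + (n - R0))%N then - 2 * (cond n)%:R / del else 0).
Definition V3 : 'M[R]_dd := Mx dd (fun n h => if h == (2 * KK + (n - R0))%N then (cond n)%:R / del else 0).
Definition Vmx := V1 + V2 + V3.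
Definition Lnew : layer dd := Layer 0 bv 0 uv 0 Amx Bmx Cmx Umx Vmx.
Definition F' := Ffun Lnew F.

Lemma del_gt0 : 0 < del. Proof. exact: gap_gt0. Qed.

Lemma d3K : (3 * KK <= dd)%N.
Proof. have := hd; have := hWW; have := hK; lia. Qed.

Lemma at_hidden g h : (h < 3 * KK)%N ->
  at_ (relu (Umx *m g + uv)) h = Num.max (scal M g + uf h) 0.
Proof.
move=> hh; have hhd : (h < dd)%N by apply: leq_trans hh d3K.
rewrite at_relu atD at_Mx // at_Cv // hh; congr (Num.max (_ + _) _).
by apply: eq_bigr => q _; rewrite mulrC.
Qed.

Lemma at_V g n : at_ (Vmx *m relu (Umx *m g + uv)) n =
  if cond n then hat del (scal M g - pk (n - R0)) else 0.
Proof.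
have hK := hK; have hd := hd; have hW := hWW.
case: (ltnP n dd) => hn; last first.
  rewrite at_ge //; case: ifP => // /andP[/andP[_ h] _]; lia.
rewrite !mulmxDl !atD !at_Mx_sel //.
case: ifP => hc; last by rewrite !nF !mulr0 !mul0r !addr0.
rewrite nT; move: hc => /andP[/andP[h1 h2] _].
set k := (n - R0)%N; have hk : (k < KK)%N by rewrite /k; lia.
rewrite !at_hidden; try lia.
rewrite /uf hk.
have -> : (KK + k < KK)%N = false by lia.
have -> : (KK + k < 2 * KK)%N by lia.
have -> : (2 * KK + k < KK)%N = false by lia.
have -> : (2 * KK + k < 2 * KK)%N = false by lia.
have -> : (2 * KK + k < 3 * KK)%N by lia.
have -> : (KK + k - KK = k)%N by lia.
have -> : (2 * KK + k - 2 * KK = k)%N by lia.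
have hdel := del_gt0.
rewrite /hat; set z := scal M g - pk k.
have -> : scal M g + (- pk k + del) = z + del by rewrite /z; ring.
have -> : scal M g + (- pk k - del) = z - del by rewrite /z; ring.
field; exact: lt0r_neq0.
Qed.

Lemma at_F' x n : at_ (F' x) n = at_ (G x) n + (if cond n then hat del (sv x - pk (n - R0)) else 0).
Proof. by rewrite /F' /Ffun /= !atD at_V at0 addr0. Qed.

Lemma step_inv : Inv eG eH (rcons net Lnew) F'.
Proof.
have hK := hK; have hd := hd; have hW := hWW; have hR0 := hR0.
case: hInv => hfG hfH _ _; split.
- move=> u v huv; rewrite /gnn_f foldl_rcons; exact: step_fun hfG u v huv.
- move=> u v huv; rewrite /gnn_f foldl_rcons; exact: step_fun hfH u v huv.
- move=> c hc k hk; rewrite at_F' at_G_low; last by rewrite -/R0; lia.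
  have hg := Cs_good hc.
  rewrite good_F //; last by rewrite -/R0; lia.
  rewrite add0r /cond /inb -/R0 addKn.
  have -> : (R0 <= R0 + k)%N && (R0 + k < R0 + KK)%N by lia.
  have hic : (index c (Cs i.+1) < size (Cs i.+1))%N by rewrite index_mem.
  case: (eqVneq k (index c (Cs i.+1))) => [->|hne].
    rewrite hic /= /pk nth_index // subrr hat0 //; exact: del_gt0.
  case: (ltnP k (size (Cs i.+1))) => hks /=; last by [].
  set c2 := nth (dflt i.+1) (Cs i.+1) k.
  have hc2 : c2 \in Cs i.+1 by apply: mem_nth.
  have hcc : c != c2.
    apply: contra hne => /eqP e; rewrite e /c2 index_uniq //; exact: uniq_Cs.
  have hGc : G c != G c2 by apply: contra hcc => /eqP /G_inj ->.
  have hsc : sv c != sv c2.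
    apply: contra hGc => /eqP e; apply/eqP; apply: hM => //; exact: map_f.
  rewrite hat_far //; first exact: del_gt0.
  apply: gap_le; [exact: map_f | exact: map_f | exact: hsc].
- move=> c hc n hn.
  have hn' : (R0 + WW <= n)%N by move: hn; rewrite mulSn addnC.
  rewrite at_F' at_G_high //; last exact: Cs_good.
  rewrite /cond /inb; case: ifP => [/andP[/andP[_ h] _]|_]; [lia | exact: addr0].
Qed.
End Layer.


Lemma build (VG : finType) (eG : rel VG) (VH : finType) (eH : rel VH) (Lmax j : nat) :
  (j <= Lmax)%N -> exists (net : seq (layer (d VG VH Lmax))) (F : colT j -> 'cV[R]_(d VG VH Lmax)),
    size net = j /\ Inv eG eH net F.
Proof.
elim: j => [_|j IH hj].
  have hK : (0 < K VG VH)%N by [].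
  have hW : W VG VH = (3 * K VG VH + K VG VH * K VG VH)%N by [].
  have hd : (W VG VH <= d VG VH Lmax)%N by rewrite /d leq_pmull.
  exists [::], (fun _ => \col_(q < d VG VH Lmax) (if val q == 0%N then 1 else 0)); split => //; split => //.
  - move=> c hc k hk; rewrite mul0n add0n.
    have -> : index c (Cs eG eH 0) = 0%N.
      by move: hc; case: (Cs eG eH 0) => // a s _ /=; case: a; case: c.
    have hkd : (k < d VG VH Lmax)%N by lia.
    by rewrite (at_lt _ hkd) mxE /=; case: eqP.
  - move=> c _ n hn; rewrite mul1n in hn; case: (ltnP n (d VG VH Lmax)) => hnd; last exact: at_ge.
    rewrite (at_lt _ hnd) mxE /=; case: eqP => // e; lia.
have [net [F [hs hI]]] := IH (ltnW hj).
have [M hM] := exists_inj_w [seq G F x | x <- Cs eG eH j.+1].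
exists (rcons net (Lnew eG eH F M)), (F' eG eH F M); split.
  by rewrite size_rcons hs.
exact: step_inv.
Qed.

Lemma at_out (V : finType) (e : rel V) (dd l : nat) (net : seq (layer dd)) (F : colT l -> 'cV[R]_dd) n :
  (forall u v, e u v -> gnn_f e net u v = F (eb e l u v)) ->
  at_ (gnn_out e net) n = \sum_(c <- cols e l) at_ (F c) n.
Proof.
move=> hf; rewrite /gnn_out at_sum.
rewrite (eq_bigr (fun u => \sum_(v | e u v) at_ (F (eb e l u v)) n)); last first.
  move=> u _; rewrite at_sum; apply: eq_bigr => v hv; by rewrite hf.
rewrite pair_big_dep /cols big_map big_enum /=; apply: eq_bigl => p; by rewrite inE.
Qed.

Lemma lift_dist (VG : finType) (eG : rel VG) (VH : finType) (eH : rel VH) l :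
  eb_graph eG l <> eb_graph eH l -> eb_graph eG l.+1 <> eb_graph eH l.+1.
Proof.
move=> h E; apply: h.
have hc : forall (V : finType) (e : rel V), cols e l = [seq c.1.1.1 | c <- cols e l.+1].
  by move=> V e; rewrite /cols -map_comp.
rewrite /eb_graph -/(cols eG l) -/(cols eH l) -/(cols eG l.+1) -/(cols eH l.+1) in E *.
apply/eq_seq_msetP; rewrite !hc; apply: perm_map; exact/eq_seq_msetP.
Qed.

Lemma size_nbr (V : finType) (P : pred V) : size [seq x <- enum V | P x] = #|[pred x | P x]|.
Proof.
rewrite size_filter -sum1_count big_enum_cond -sum1_card; apply: eq_bigl => x; by rewrite !inE.
Qed.

Lemma card_l1 (V : finType) (e : rel V) : graph_ok e ->
  \sum_(c <- cols e 1) ((size (enum_mset c.1.1.2))%:R : R)^-1 = #|V|%:R.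
Proof.
case=> _ [_ hne].
rewrite /cols big_map big_enum /=.
rewrite (eq_bigl (fun p : V * V => xpredT p.1 && e p.1 p.2)); last by move=> p; rewrite inE.
rewrite -(pair_big_dep xpredT (fun u v => e u v) (fun u v => ((size (enum_mset (eb e 1 u v).1.1.2))%:R : R)^-1)) /=.
rewrite -sum1_card natr_sum; apply: eq_bigr => u _.
rewrite (eq_bigr (fun _ => ((#|[pred x | e u x]|)%:R : R)^-1)); last first.
  move=> v _; by rewrite /= (perm_size (perm_eq_seq_mset _)) size_map size_nbr.
rewrite sumr_const.
have [x hx] := hne u.
have hpos : (0 < #|[pred x | e u x]|)%N by apply/card_gt0P; exists x.
have -> : #|e u| = #|[pred x | e u x]| by apply: eq_card.
rewrite -[_ *+ _]mulr_natr mulVf // pnatr_eq0 -lt0n.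
exact: hpos.
Qed.


Lemma card_eq (VG : finType) (eG : rel VG) (VH : finType) (eH : rel VH) :
  graph_ok eG -> graph_ok eH -> eb_graph eG 1 = eb_graph eH 1 -> #|VG| = #|VH|.
Proof.
move=> okG okH E; apply/eqP; rewrite -(eqr_nat R) -(card_l1 okG) -(card_l1 okH).
rewrite -(perm_big _ (perm_eq_seq_mset (cols eG 1))) -(perm_big _ (perm_eq_seq_mset (cols eH 1))).
by rewrite /eb_graph in E; rewrite -/(cols eG 1) -/(cols eH 1) in E; rewrite E.
Qed.


Theorem mainTheorem9 (VG : finType) (eG : rel VG) (VH : finType) (eH : rel VH) :
  graph_ok eG -> graph_ok eH ->
  eb_distinguishable eG eH ->
  exists (d t : nat) (net : seq (layer d)),
    (1 <= d)%N /\ (1 <= t)%N /\ size net = t /\ gnn_out eG net <> gnn_out eH net.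
Proof.
move=> okG okH hdist.
have [l [hl1 hl]] : exists l, (1 <= l)%N /\ eb_graph eG l <> eb_graph eH l.
  case: hdist => [hc|[l hl]].
    by exists 1%N; split => // E; apply: hc; exact: card_eq okG okH E.
  case: l hl => [|l] hl; [exists 1%N | exists l.+1]; split => //; exact: lift_dist.
have [net [F [hs [hfG hfH hone hzero]]]] := build eG eH (leqnn l).
exists (d VG VH l), l, net; split; first by rewrite /d /W /K muln_gt0 addn_gt0 muln_gt0.
split => //; split => // E; apply: hl.
have hread : forall (V : finType) (e : rel V),
    (forall u v, e u v -> gnn_f e net u v = F (eb e l u v)) ->
    (forall c, c \in cols e l -> c \in Cs eG eH l) ->
    forall k, (k < K VG VH)%N ->
    at_ (gnn_out e net) (l * W VG VH + k) =
    \sum_(a <- enum_mset (seq_mset (cols e l))) (index a (Cs eG eH l) == k)%:R.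
  move=> V e hf hsub k hk; rewrite (at_out _ hf) (perm_big _ (perm_eq_seq_mset _)).
  by apply: eq_big_seq => c /hsub hc; rewrite hone // eq_sym.
have subG : forall c, c \in cols eG l -> c \in Cs eG eH l.
  by move=> c hc; rewrite mem_undup mem_cat hc.
have subH : forall c, c \in cols eH l -> c \in Cs eG eH l.
  by move=> c hc; rewrite mem_undup mem_cat hc orbT.
rewrite /eb_graph -/(cols eG l) -/(cols eH l).
apply: (@mset_from_codes _ (mem (Cs eG eH l)) (index^~ (Cs eG eH l)) (K VG VH)).
- exact: index_inj_Cs.
- move=> a ha; apply: leq_trans (ltnW (size_Cs eG eH l)); by rewrite index_mem.
- by move=> a; rewrite mem_seq_mset; apply: subG.
- by move=> a; rewrite mem_seq_mset; apply: subH.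
- move=> k hk; rewrite -(hread _ _ hfG subG k hk) -(hread _ _ hfH subH k hk).
  by rewrite E.
Qed.
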